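(* Let $n\ge3$ and let $\mathcal T$ be an admissible family of arcs with endpoints in $[n]$ consisting of exactly $n-1$ arcs (equivalently, a set of $n-1$ facets of $W_n$ with nonempty intersection). Then the vectors $\{e_i-e_j:[i,j)\in\mathcal T\}$ form a $\mathbb{Z}$-basis of the type A root lattice $\Lambda_n=\{x\in\mathbb{Z}^n:\sum_i x_i=0\}$. Consequently $(W_n,\phi_n)$ is a combinatorial quasitoric pair.
   Context: Identify $[n]$ with the vertices of a regular $n$-gon in $S^1$, labelled counterclockwise, with counterclockwise order $\preceq$; for $a\ne b\in[n]$, $[a,b)=\{z\in S^1:a\preceq z\prec b\}$. A finite collection of such arcs is admissible if any two distinct members $I,J$ are either intersecting and strictly nested, or disjoint with the sink of neither equal to the source of the other. Admissible families of arcs correspond to faces of the $(n-1)$-dimensional cyclohedron $W_n$, single arcs to facets. $\phi_n$ assigns to the facet $[i,j)$ the vector $e_i-e_j$. A combinatorial quasitoric pair $(P,\phi)$ consists of a simple $(n-1)$-polytope $P$ and an assignment of lattice vectors in $\mathbb{Z}^{n-1}$ to facets such that the vectors of any $n-1$ facets meeting in a vertex form a lattice basis. *)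

(* Defs.v *)
From HB Require Import structures.
From mathcomp Require Import all_boot all_order all_algebra.
Set Implicit Arguments. Unset Strict Implicit. Unset Printing Implicit Defensive.
Import Order.TTheory GRing.Theory Num.Theory.

(* Vertices of the regular n-gon: 'I_n, labelled counterclockwise.
   An arc [a,b) (a <> b) is encoded by the pair (a,b) : 'I_n * 'I_n.
   As a subset of S^1, [a,b) is the union of the half-open edges
   [k,k+1) (k : 'I_n, indices mod n) for k running counterclockwise from
   a up to b-1.  Since all arcs are unions of such edges, inclusion /
   intersection of arcs as subsets of S^1 coincide with inclusion /
   intersection of their sets of edges, given by [arc_set]. *)

Definition is_arc (n : nat) (p : 'I_n * 'I_n) : bool := p.1 != p.2.

Definition ccw_offset (n : nat) (a z : 'I_n) : nat := ((z + n) - a) %% n.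

Definition arc_set (n : nat) (p : 'I_n * 'I_n) : {set 'I_n} :=
  [set k : 'I_n | ccw_offset p.1 k < ccw_offset p.1 p.2].

Definition source (n : nat) (p : 'I_n * 'I_n) : 'I_n := p.1.
Definition sink (n : nat) (p : 'I_n * 'I_n) : 'I_n := p.2.

Definition compatible_arcs (n : nat) (p q : 'I_n * 'I_n) : bool :=
  ((arc_set p :&: arc_set q != set0) &&
     ((arc_set p \proper arc_set q) || (arc_set q \proper arc_set p)))
  || ([disjoint arc_set p & arc_set q] &&
      (sink p != source q) && (sink q != source p)).

Definition admissible (n : nat) (T : {set 'I_n * 'I_n}) : bool :=
  [forall p in T, is_arc p] &&
  [forall p in T, forall q in T, (p != q) ==> compatible_arcs p q].

Definition e_vec (n : nat) (i : 'I_n) : 'rV[int]_n := delta_mx ord0 i.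

Definition arc_vec (n : nat) (p : 'I_n * 'I_n) : 'rV[int]_n :=
  (e_vec p.1 - e_vec p.2)%R.

Definition in_Lambda (n : nat) (x : 'rV[int]_n) : bool :=
  (\sum_(i < n) x ord0 i == 0)%R.

Definition is_Z_basis_of_Lambda (n : nat) (T : {set 'I_n * 'I_n})
    (v : 'I_n * 'I_n -> 'rV[int]_n) : Prop :=
  [/\ (forall p, p \in T -> in_Lambda (v p)),
      (forall c : 'I_n * 'I_n -> int,
          (\sum_(p in T) c p *: v p = 0)%R -> forall p, p \in T -> c p = 0%R)
    & (forall x : 'rV[int]_n, in_Lambda x ->
          exists c : 'I_n * 'I_n -> int, x = (\sum_(p in T) c p *: v p)%R)].

(* Main.v *)
Require Import Defs.
From HB Require Import structures.
From mathcomp Require Import all_boot all_order all_algebra zify.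
Set Implicit Arguments. Unset Strict Implicit. Unset Printing Implicit Defensive.
Import Order.TTheory GRing.Theory Num.Theory.

Section Arcs.
Variable n : nat.
Implicit Types (a k z : 'I_n.+1) (p q : 'I_n.+1 * 'I_n.+1).

Definition prev k : 'I_n.+1 := inord (if nat_of_ord k == 0 then n else (nat_of_ord k).-1).

Lemma prevE k : nat_of_ord (prev k) = if nat_of_ord k == 0 then n else (nat_of_ord k).-1.
Proof.
rewrite /prev inordK //; case: eqP => _ //; exact: leq_ltn_trans (leq_pred _) (ltn_ord k).
Qed.

Lemma offE a z : ccw_offset a z = if a <= z then z - a else z + n.+1 - a.
Proof.
rewrite /ccw_offset; case: leqP => h.
- have -> : z + n.+1 - a = (z - a) + n.+1 by lia.
  rewrite modnDr modn_small //; have := ltn_ord z; lia.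
- rewrite modn_small //; have := ltn_ord z; lia.
Qed.

Lemma off_lt a z : ccw_offset a z < n.+1.
Proof. rewrite offE; have := ltn_ord z; have := ltn_ord a; case: (leqP a z); lia. Qed.

Lemma off_eq a z z' : ccw_offset a z = ccw_offset a z' -> z = z'.
Proof.
rewrite !offE => h; apply: val_inj => /=.
have := ltn_ord z; have := ltn_ord a; have := ltn_ord z'.
move: h; case: (leqP a z); case: (leqP a z'); lia.
Qed.

Lemma off_self a : ccw_offset a a = 0.
Proof. by rewrite offE leqnn subnn. Qed.

Lemma off0 a z : (ccw_offset a z == 0) = (z == a).
Proof.
apply/eqP/eqP => [h|->]; last exact: off_self.
by apply: (@off_eq a); rewrite h off_self.
Qed.

Lemma off_prev a k :
  ccw_offset a (prev k) = if k == a then n else (ccw_offset a k).-1.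
Proof.
case: eqP => [->|/eqP hne].
- rewrite offE; have := ltn_ord a; case: (leqP a (prev a)); rewrite prevE; case: eqP => h0; rewrite -?subn1; lia.
- have hv : (nat_of_ord k) <> (nat_of_ord a) by move=> h; move/eqP: hne; apply; exact: val_inj.
  move: hv; rewrite !offE; have := ltn_ord a; have := ltn_ord k.
  case: (leqP a (prev k)); case: (leqP a k); rewrite prevE; case: eqP => h0; rewrite -?subn1; lia.
Qed.

Lemma in_arc p k : (k \in arc_set p) = (ccw_offset p.1 k < ccw_offset p.1 p.2).
Proof. by rewrite inE. Qed.

Lemma arc_step p k : is_arc p ->
  ((k \in arc_set p) + (k == p.2) = (k == p.1) + (prev k \in arc_set p))%N.
Proof.
rewrite /is_arc => hp.
rewrite !in_arc off_prev.
have hL : ccw_offset p.1 p.2 != 0 by rewrite off0 eq_sym.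
have e2 : (k == p.2) = (ccw_offset p.1 k == ccw_offset p.1 p.2).
  apply/eqP/eqP => [->//|h]; exact: off_eq h.
have e1 : (k == p.1) = (ccw_offset p.1 k == 0) by rewrite off0.
rewrite e1 e2.
have := off_lt p.1 k; have := off_lt p.1 p.2.
move: hL.
set L := ccw_offset p.1 p.2; set o := ccw_offset p.1 k.
case: (o =P 0) => h0; case: (o =P L) => hL0; case: (ltnP o L) => h1;
  case: (ltnP n L) => h2; case: (ltnP o.-1 L) => h3; rewrite -?subn1 in h3 *; rewrite /=; lia.
Qed.

Lemma src_in p : is_arc p -> p.1 \in arc_set p /\ prev p.1 \notin arc_set p.
Proof.
move=> hp; have := arc_step p.1 hp; rewrite eqxx.
have -> : (p.1 == p.2) = false by apply/negbTE.
by case: (p.1 \in arc_set p); case: (prev p.1 \in arc_set p).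
Qed.

Lemma sink_in p : is_arc p -> p.2 \notin arc_set p /\ prev p.2 \in arc_set p.
Proof.
move=> hp; have := arc_step p.2 hp; rewrite eqxx.
have -> : (p.2 == p.1) = false by apply/negbTE; rewrite eq_sym.
by case: (p.2 \in arc_set p); case: (prev p.2 \in arc_set p).
Qed.

Lemma src_eq p k : is_arc p -> k \in arc_set p -> prev k \notin arc_set p -> p.1 = k.
Proof.
move=> hp hk hpk; have := arc_step k hp; rewrite hk (negbTE hpk).
by case: (k =P p.1) => [->//|_]; case: (k == p.2).
Qed.

Section Main.
Variable T : {set 'I_n.+1 * 'I_n.+1}.
Hypothesis hT : admissible T.

Lemma T_arc p : p \in T -> is_arc p.
Proof. by case/andP: hT => /forall_inP h _; apply: h. Qed.

Lemma T_compat p q : p \in T -> q \in T -> p != q -> compatible_arcs p q.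
Proof.
move=> hp hq hpq; case/andP: hT => _ /forall_inP /(_ p hp) /forall_inP /(_ q hq).
by move/implyP; apply.
Qed.

Lemma nested p q k : p \in T -> q \in T -> p != q ->
  k \in arc_set p -> k \in arc_set q ->
  (arc_set p \proper arc_set q) \/ (arc_set q \proper arc_set p).
Proof.
move=> hp hq hpq kp kq; case/orP: (T_compat hp hq hpq).
  by case/andP => _ /orP [] h; [left|right].
case/andP => /andP [hd _] _; exfalso.
by move: hd; rewrite -setI_eq0 => /eqP/setP/(_ k); rewrite in_set0 in_setI kp kq.
Qed.

Lemma disj_sink p q : p \in T -> q \in T -> p != q ->
  [disjoint arc_set p & arc_set q] -> p.2 != q.1.
Proof.
move=> hp hq hpq hd; case/orP: (T_compat hp hq hpq).
  by case/andP; rewrite setI_eq0 hd.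
by case/andP => /andP [_ h] _.
Qed.

Lemma priv_exists (A : {set 'I_n.+1}) e0 : e0 \in A ->
  (forall q, q \in T -> arc_set q \proper A -> e0 \in arc_set q -> q.2 \in A) ->
  exists2 k, k \in A & forall q, q \in T -> arc_set q \proper A -> k \notin arc_set q.
Proof.
move=> he0 hsink.
case: (pickP [pred k | (k \in A) && [forall q in T, (arc_set q \proper A) ==> (k \notin arc_set q)]]).
  move=> k /andP [kA /forall_inP h]; exists k => // q qT qA.
  by move/implyP: (h q qT); apply.
move=> hcov.
have cover k : k \in A -> exists q, [/\ q \in T, arc_set q \proper A & k \in arc_set q].
  move=> kA; move: (hcov k); rewrite /= kA /= => /negbT /forallPn [q].
  by rewrite !negb_imply => /and4P [? ? ? _]; exists q.
have [q0 [q0T q0A e0q0]] := cover e0 he0.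
pose S := [pred q | [&& q \in T, arc_set q \proper A & e0 \in arc_set q]].
have hS0 : S q0 by apply/and3P.
case: (arg_maxnP (fun q => #|arc_set q|) hS0) => q1 /and3P [q1T q1A e0q1] hmax.
have b1A : q1.2 \in A by apply: hsink.
have [q2 [q2T q2A b1q2]] := cover _ b1A.
have [b1n1 pb1] := sink_in (T_arc q1T).
have hne : q1 != q2 by apply/eqP => e; move: b1q2; rewrite -e (negbTE b1n1).
case/orP: (T_compat q1T q2T hne).
  case/andP => _ /orP [] hpr.
  - have : S q2 by apply/and3P; split => //; apply: (subsetP (proper_sub hpr)).
    by move/hmax; rewrite /= leqNgt (proper_card hpr).
  - by move: b1n1; rewrite (subsetP (proper_sub hpr)).
case/andP => /andP [hd hs] _.
have : prev q1.2 \notin arc_set q2.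
  by apply/negP => h; move: hd; rewrite -setI_eq0 => /eqP/setP/(_ (prev q1.2)); rewrite in_set0 in_setI pb1 h.
move/(src_eq (T_arc q2T) b1q2) => e; by rewrite /sink /source e eqxx in hs.
Qed.


Lemma priv_arc p : p \in T -> exists2 k, k \in arc_set p &
  forall q, q \in T -> arc_set q \proper arc_set p -> k \notin arc_set q.
Proof.
move=> pT; have hp := T_arc pT; have [p1in pp1] := src_in hp.
apply: (priv_exists p1in) => q qT qp p1q.
have hq1 : q.1 = p.1.
  apply: (src_eq (T_arc qT) p1q); apply/negP => h; move: pp1.
  by rewrite (subsetP (proper_sub qp)).
rewrite in_arc ltnNge; apply/negP => hle.
move: qp; rewrite properE => /andP [_ /negP]; apply.
apply/subsetP => k; rewrite !in_arc hq1 => hk; exact: leq_trans hk hle.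
Qed.

Lemma priv_full : exists z, forall q, q \in T -> z \notin arc_set q.
Proof.
have [z _ hz] := @priv_exists setT ord0 (in_setT _) (fun q _ _ _ => in_setT _).
exists z => q qT; apply: hz => //; rewrite properT.
apply/eqP => e; have [h _] := sink_in (T_arc qT); by rewrite e in_setT in h.
Qed.

Definition pi p := odflt ord0
  [pick k in arc_set p | [forall q in T, (arc_set q \proper arc_set p) ==> (k \notin arc_set q)]].

Lemma pi_spec p : p \in T -> pi p \in arc_set p /\
  forall q, q \in T -> arc_set q \proper arc_set p -> pi p \notin arc_set q.
Proof.
move=> pT; rewrite /pi; case: pickP => [k /andP [kp /forall_inP h]|h] /=.
  by split => // q qT; move/implyP: (h q qT).
exfalso; have [k kp hk] := priv_arc pT; move: (h k); rewrite /= kp /=.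
by move/negbT/negP; apply; apply/forall_inP => q qT; apply/implyP; apply: hk.
Qed.

Definition zz := odflt ord0 [pick k | [forall q in T, k \notin arc_set q]].

Lemma zz_spec q : q \in T -> zz \notin arc_set q.
Proof.
rewrite /zz; case: pickP => [k /forall_inP h|h] /=; first exact: h.
exfalso; have [k hk] := priv_full; move: (h k) => /negbT/negP; apply.
by apply/forall_inP.
Qed.

Lemma in_pi p q : p \in T -> q \in T ->
  (pi p \in arc_set q) = (q == p) || (arc_set p \proper arc_set q).
Proof.
move=> pT qT; have [pip hpi] := pi_spec pT.
case: (eqVneq q p) => [->//|hqp] /=.
apply/idP/idP => [h|h]; last exact: (subsetP (proper_sub h)).
have hpq : p != q by rewrite eq_sym.
case: (nested pT qT hpq pip h) => // hqp'.
by move: (hpi q qT hqp'); rewrite h.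
Qed.

Lemma pi_inj : {in T &, injective pi}.
Proof.
move=> p q pT qT e; apply/eqP; apply/negP => /negP hne.
have [pip _] := pi_spec pT; have [qiq _] := pi_spec qT.
have h1 := in_pi qT pT; have h2 := in_pi pT qT.
rewrite -e pip (negbTE hne) /= in h1.
rewrite e qiq eq_sym (negbTE hne) /= in h2.
by have := proper_card (esym h1); rewrite ltnNge (ltnW (proper_card (esym h2))).
Qed.

Lemma pi_zz p : p \in T -> pi p != zz.
Proof.
move=> pT; have [pip _] := pi_spec pT; apply/eqP => e.
by move: (zz_spec pT); rewrite -e pip.
Qed.

Lemma pi_onto k : #|T| = n -> k != zz -> exists2 p, p \in T & pi p = k.
Proof.
move=> hc hk.
have hsub : pi @: T \subset [set~ zz].
  apply/subsetP => _ /imsetP [p pT ->]; rewrite !inE; exact: pi_zz.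
have : pi @: T == [set~ zz].
  have hci : #|pi @: T| = n.
    rewrite card_in_imset //. exact: pi_inj.
  have hcz : #|[set~ zz]| = n.
    by rewrite cardsC1 card_ord.
  by rewrite eqEcard hsub hcz hci leqnn.
move/eqP => e; have : k \in [set~ zz] by rewrite !inE.
by rewrite -e => /imsetP [p pT ->]; exists p.
Qed.


Definition D (c : 'I_n.+1 * 'I_n.+1 -> int) k : int := (\sum_(q in T | k \in arc_set q) c q)%R.

Lemma DE c k : D c k = (\sum_(q in T) c q * (k \in arc_set q)%:R)%R.
Proof.
rewrite /D big_mkcondr /=; apply: eq_bigr => q _.
by case: (k \in arc_set q); rewrite ?mulr1 ?mulr0.
Qed.

Lemma coordD (c : 'I_n.+1 * 'I_n.+1 -> int) k : ((\sum_(p in T) c p *: arc_vec p) ord0 k = D c k - D c (prev k))%R.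
Proof.
rewrite summxE !DE -sumrB; apply: eq_bigr => p pT.
rewrite mxE /arc_vec /e_vec !mxE eqxx /= -mulrBr; congr (_ * _)%R.
have h := congr1 (fun m : nat => (m%:R : int)%R) (arc_step k (T_arc pT)); rewrite /= !natrD in h.
move: h.
move: ((k \in arc_set p)%:R : int)%R ((k == p.2)%:R : int)%R ((k == p.1)%:R : int)%R ((prev k \in arc_set p)%:R : int)%R.
move=> a b c' d h. lia.
Qed.


Lemma D_zz (c : 'I_n.+1 * 'I_n.+1 -> int) : D c zz = 0%R.
Proof.
rewrite /D big1 // => q /andP [qT h].
by rewrite (negbTE (zz_spec qT)) in h.
Qed.

Lemma D_pi (c : 'I_n.+1 * 'I_n.+1 -> int) p : p \in T ->
  D c (pi p) = (c p + \sum_(q in T | arc_set p \proper arc_set q) c q)%R.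
Proof.
move=> pT; have [pip _] := pi_spec pT.
rewrite /D (bigD1 p) /=; last by rewrite pT pip.
congr (_ + _)%R; apply: eq_bigl => q.
case qT: (q \in T) => //=; rewrite (in_pi pT qT).
case: (eqVneq q p) => [->|_] /=; [by rewrite properxx | by rewrite andbT].
Qed.

Fixpoint g (d : 'I_n.+1 -> int) (h : nat) (p : 'I_n.+1 * 'I_n.+1) : int :=
  if h is h'.+1 then (d (pi p) - \sum_(q in T | arc_set p \proper arc_set q) g d h' q)%R
  else 0%R.

Lemma card_le (A : {set 'I_n.+1}) : #|A| <= n.+1.
Proof. by rewrite -[X in _ <= X](card_ord n.+1) max_card. Qed.

Lemma g_stable d h p : n.+1 - #|arc_set p| < h -> g d h.+1 p = g d h p.
Proof.
elim: h p => [|h IH] p hp //=.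
congr (_ - _)%R; apply: eq_bigr => q /andP [_ hpq]; apply: IH.
have := proper_card hpq; have := card_le (arc_set q); move: hp.
move: (#|arc_set p|) (#|arc_set q|) => a b; lia.
Qed.

Lemma gS d h p : g d h.+1 p =
  (d (pi p) - \sum_(q in T | arc_set p \proper arc_set q) g d h q)%R.
Proof. by []. Qed.

Definition cs d p := g d n.+2 p.

Lemma cs_eq d p :
  cs d p = (d (pi p) - \sum_(q in T | arc_set p \proper arc_set q) cs d q)%R.
Proof.
rewrite /cs gS; congr (_ - _)%R; apply: eq_bigr => q /andP [_ hpq].
symmetry; apply: g_stable; have := proper_card hpq.
move: (#|arc_set p|) (#|arc_set q|) => a b; lia.
Qed.

Lemma D_cs d p : p \in T -> D (cs d) (pi p) = d (pi p).
Proof. by move=> pT; rewrite D_pi // {1}cs_eq subrK. Qed.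

Lemma sum_ind (a : 'I_n.+1) : (\sum_(i < n.+1) ((i == a)%:R : int))%R = 1%R.
Proof. by rewrite (bigD1 a) //= eqxx big1 ?addr0 // => i /negbTE ->. Qed.

Lemma arc_vec_lambda p : in_Lambda (arc_vec p).
Proof.
rewrite /in_Lambda (eq_bigr (fun i => ((i == p.1)%:R - (i == p.2)%:R : int)%R)).
  by rewrite sumrB !sum_ind subrr.
by move=> i _; rewrite /arc_vec /e_vec !mxE eqxx.
Qed.

Lemma indep (c : 'I_n.+1 * 'I_n.+1 -> int) :
  (\sum_(p in T) c p *: arc_vec p = 0)%R -> forall p, p \in T -> c p = 0%R.
Proof.
move=> H.
have hstep k : D c k = D c (prev k).
  have := coordD c k; rewrite H mxE => h; apply/eqP; rewrite -subr_eq0 -h.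
  done.
have hconst : forall m k, ccw_offset zz k = m -> D c k = 0%R.
  elim=> [|m IH] k hk.
    by move/eqP: hk; rewrite off0 => /eqP ->; exact: D_zz.
  have hkz : k != zz by rewrite -off0 hk.
  rewrite hstep; apply: IH; by rewrite off_prev (negbTE hkz) hk.
have main : forall h p, p \in T -> n.+1 - #|arc_set p| < h -> c p = 0%R.
  elim=> [|h IH] p pT hp //.
  have := D_pi c pT; rewrite (hconst _ _ erefl) big1 ?addr0 => [->//|q /andP [qT hpq]].
  apply: IH qT _; have := proper_card hpq; have := card_le (arc_set q); move: hp.
  move: (#|arc_set p|) (#|arc_set q|) => a b; lia.
move=> p pT; apply: (main n.+2 p pT); lia.
Qed.

Definition dd (x : 'rV[int]_n.+1) k : int :=
  (\sum_(i < n.+1 | (0 < ccw_offset zz i)%N && (ccw_offset zz i <= ccw_offset zz k)%N) x ord0 i)%R.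

Lemma dd_zz x : dd x zz = 0%R.
Proof.
rewrite /dd big_pred0 // => i; rewrite off_self.
by case: (ccw_offset zz i) => [|m] //=.
Qed.

Lemma dd_step x k : in_Lambda x -> x ord0 k = (dd x k - dd x (prev k))%R.
Proof.
move=> hx; rewrite /dd off_prev.
case: (eqVneq k zz) => [->|hk].
  rewrite off_self big_pred0; last by move=> i; case: (ccw_offset zz i).
  move: hx; rewrite /in_Lambda (bigD1 zz) //= => /eqP h.
  have -> : (\sum_(i < n.+1 | (0 < ccw_offset zz i)%N && (ccw_offset zz i <= n)%N) x ord0 i
     = \sum_(i < n.+1 | i != zz) x ord0 i)%R.
    apply: eq_bigl => i; rewrite -off0 -lt0n.
    by have := off_lt zz i; case: (0 < _) => //= /ltnSE ->.
  move: h; move: (x ord0 zz) (\sum_(i < n.+1 | i != zz) x ord0 i)%R => a b; lia.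
have hk0 : ccw_offset zz k != 0 by rewrite off0.
rewrite (bigD1 k) /=; last by rewrite lt0n hk0 leqnn.
have -> : (\sum_(i < n.+1 | ((0 < ccw_offset zz i)%N && (ccw_offset zz i <= ccw_offset zz k)%N) && (i != k))
      x ord0 i
   = \sum_(i < n.+1 | (0 < ccw_offset zz i)%N && (ccw_offset zz i <= (ccw_offset zz k).-1)%N) x ord0 i)%R.
  apply: eq_bigl => i.
  have e : (i == k) = (ccw_offset zz i == ccw_offset zz k).
    by apply/eqP/eqP => [->//|h]; exact: off_eq h.
  rewrite e; move: hk0; rewrite -?subn1.
  move: (ccw_offset zz i) (ccw_offset zz k) => a b hb.
  case: (0 < a) => //=; case: (a =P b) => [->|hab] /=.
    by rewrite leqnn /=; apply/esym/negbTE; rewrite -ltnNge; lia.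
  case: (leqP a b) => h1; case: (leqP a (b - 1)) => h2 //=; lia.
by rewrite addrK.
Qed.

Lemma span : #|T| = n -> forall x, in_Lambda x ->
  exists c : 'I_n.+1 * 'I_n.+1 -> int, x = (\sum_(p in T) c p *: arc_vec p)%R.
Proof.
move=> hc x hx; exists (cs (dd x)); apply/rowP => k; rewrite coordD.
have HD k' : D (cs (dd x)) k' = dd x k'.
  case: (eqVneq k' zz) => [->|hk]; first by rewrite D_zz dd_zz.
  by have [p pT <-] := pi_onto hc hk; exact: D_cs.
by rewrite !HD -dd_step.
Qed.

End Main.
End Arcs.

Theorem mainTheorem14 (n : nat) (T : {set 'I_n * 'I_n}) :
  3 <= n -> admissible T -> #|T| = n.-1 ->
  is_Z_basis_of_Lambda T (@arc_vec n).
Proof.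
case: n T => [//|n] T _ hT hc; split.
- move=> p _; exact: (@arc_vec_lambda n p).
- move=> c; exact: (@indep n T hT c).
- move=> x hx; exact: (@span n T hT hc x hx).
Qed.
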